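(* Let $\mathbf{k}$ be a field. Every connected graded left counital $\mathbf{k}$-bialgebra $(H,m,\mu,\Delta,\varepsilon)$ is a left counital Hopf algebra, i.e. it admits a right antipode $S$ with $\mathrm{id}_H\ast S=\mu\varepsilon$. Such an $S$ is given by the recursion $S(1_H)=1_H$ and, for homogeneous $x\in H^{(n)}$, $n\ge1$, $S(x)=-\sum_{(x)}x'S(x'')$, where $\tilde\Delta(x)=\Delta(x)-1\otimes x=\sum_{(x)}x'\otimes x''$ (Sweedler notation), extended linearly.
   Context: All algebras are unital commutative over $\mathbf{k}$. A left counital bialgebra $(H,m,\mu,\Delta,\varepsilon)$ is an algebra $H$ with unit map $\mu$ and algebra homomorphisms $\Delta:H\to H\otimes H$ (coassociative) and $\varepsilon:H\to\mathbf{k}$ with $(\varepsilon\otimes\mathrm{id})\Delta=\beta_\ell$, $\beta_\ell(u)=1\otimes u$ (right counicity not required). It is graded if $H=\bigoplus_{n\ge0}H^{(n)}$ for submodules with $H^{(p)}H^{(q)}\subseteq H^{(p+q)}$ and $\Delta(H^{(n)})\subseteq (H^{(0)}\otimes H^{(n)})\oplus\bigoplus_{p+q=n,\,p,q>0}H^{(p)}\otimes H^{(q)}$ for all $n$; connected if moreover $H^{(0)}=\mathrm{im}\,\mu=\mathbf{k}1_H$ and $\ker\varepsilon=\bigoplus_{n\ge1}H^{(n)}$. The convolution of $f,g\in\mathrm{End}_{\mathbf{k}}(H)$ is $f\ast g=m(f\otimes g)\Delta$. A right antipode is a linear $S:H\to H$ with $\mathrm{id}_H\ast S=\mu\varepsilon$;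 a left counital bialgebra with a right antipode is called a left counital (right antipode) Hopf algebra. *)

(* Defs.v *)
From HB Require Import structures.
From mathcomp Require Import all_boot all_order all_algebra.
Set Implicit Arguments. Unset Strict Implicit. Unset Printing Implicit Defensive.
Import Order.TTheory GRing.Theory Num.Theory.
Local Open Scope ring_scope.

Definition lin (k : fieldType) (U V : lmodType k) (f : U -> V) : Prop :=
  forall (a : k) (x y : U), f (a *: x + y) = a *: f x + f y.

Definition bilin (k : fieldType) (U V W : lmodType k) (f : U -> V -> W) : Prop :=
  (forall y, lin (fun x => f x y)) /\ (forall x, lin (f x)).

Definition trilin (k : fieldType) (U V X W : lmodType k) (f : U -> V -> X -> W) : Prop :=
  [/\ (forall y z, lin (fun x => f x y z)),
      (forall x z, lin (fun y => f x y z)) &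
      (forall x y, lin (f x y))].

Record tensor2 (k : fieldType) (H : lmodType k) := Tensor2 {
  t2_car :> lmodType k;
  t2_tens : H -> H -> t2_car;
  t2_lift : forall W : lmodType k, (H -> H -> W) -> t2_car -> W;
  t2_tens_bilin : bilin t2_tens;
  t2_lift_lin : forall (W : lmodType k) (f : H -> H -> W), bilin f -> lin (t2_lift f);
  t2_lift_tens : forall (W : lmodType k) (f : H -> H -> W), bilin f ->
    forall a b, t2_lift f (t2_tens a b) = f a b;
  t2_lift_uniq : forall (W : lmodType k) (f : H -> H -> W) (g : t2_car -> W), bilin f -> lin g ->
    (forall a b, g (t2_tens a b) = f a b) -> forall t, g t = t2_lift f t
}.

Record tensor3 (k : fieldType) (H : lmodType k) := Tensor3 {
  t3_car :> lmodType k;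
  t3_tens : H -> H -> H -> t3_car;
  t3_lift : forall W : lmodType k, (H -> H -> H -> W) -> t3_car -> W;
  t3_tens_trilin : trilin t3_tens;
  t3_lift_lin : forall (W : lmodType k) (f : H -> H -> H -> W), trilin f -> lin (t3_lift f);
  t3_lift_tens : forall (W : lmodType k) (f : H -> H -> H -> W), trilin f ->
    forall a b c, t3_lift f (t3_tens a b c) = f a b c;
  t3_lift_uniq : forall (W : lmodType k) (f : H -> H -> H -> W) (g : t3_car -> W), trilin f -> lin g ->
    (forall a b c, g (t3_tens a b c) = f a b c) -> forall t, g t = t3_lift f t
}.

Section Bialg.
Variables (k : fieldType) (H : comAlgType k).

Definition tmul (T : tensor2 H) (t u : T) : T :=
  t2_lift (fun a b => t2_lift (fun c d => t2_tens T (a * c) (b * d)) u) t.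

Definition conv (T : tensor2 H) (Delta : H -> T) (f g : H -> H) (x : H) : H :=
  t2_lift (fun a b => f a * g b) (Delta x).

Definition coassoc (T : tensor2 H) (T3 : tensor3 H) (Delta : H -> T) : Prop :=
  forall x,
    t2_lift (fun a b => t2_lift (fun y z => t3_tens T3 y z b) (Delta a)) (Delta x)
  = t2_lift (fun a b => t2_lift (fun y z => t3_tens T3 a y z) (Delta b)) (Delta x).

(* left counital bialgebra (H, m, mu, Delta, eps); mu c = c%:A; k (x) H == H via c (x) u |-> c *: u *)
Definition left_counital_bialgebra (T : tensor2 H) (T3 : tensor3 H)
    (Delta : H -> T) (eps : H -> k) : Prop :=
  [/\ lin Delta,
      (forall x y, Delta (x * y) = tmul (Delta x) (Delta y)),
      Delta 1 = t2_tens T 1 1,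
      coassoc T3 Delta &
      [/\ (forall (a : k) x y, eps (a *: x + y) = a * eps x + eps y),
      (forall x y, eps (x * y) = eps x * eps y),
      eps 1 = 1 &
      (forall u, t2_lift (fun a b => eps a *: b) (Delta u) = u)]].

Definition graded (T : tensor2 H) (Delta : H -> T) (Hn : nat -> {pred H}) : Prop :=
  [/\ (forall n, 0 \in Hn n /\
         forall (a : k) x y, x \in Hn n -> y \in Hn n -> a *: x + y \in Hn n),
      (forall x, exists N (xs : nat -> H),
          (forall i, xs i \in Hn i) /\ x = \sum_(i < N) xs i),
      (forall N (xs : nat -> H), (forall i, xs i \in Hn i) ->
          \sum_(i < N) xs i = 0 -> forall i, (i < N)%N -> xs i = 0),
      (forall p q x y, x \in Hn p -> y \in Hn q -> x * y \in Hn (p + q)%N) &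
      (forall n x, x \in Hn n -> exists s : seq (H * H),
          Delta x = \sum_(ab <- s) t2_tens T ab.1 ab.2 /\
          forall ab, ab \in s ->
            (ab.1 \in Hn 0%N /\ ab.2 \in Hn n) \/
            exists p q, [/\ (0 < p)%N, (0 < q)%N, (p + q)%N = n,
                            ab.1 \in Hn p & ab.2 \in Hn q])].

Definition connected_graded (T : tensor2 H) (Delta : H -> T) (eps : H -> k)
    (Hn : nat -> {pred H}) : Prop :=
  [/\ graded Delta Hn,
      (forall x, x \in Hn 0%N <-> exists c : k, x = c%:A) &
      (forall x, eps x = 0 <-> exists N (xs : nat -> H),
          (forall i, xs i \in Hn i.+1) /\ x = \sum_(i < N) xs i)].

End Bialg.

(* Main.v *)
Require Import Defs.
From HB Require Import structures.
From mathcomp Require Import all_boot all_order all_algebra.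
From Stdlib Require Import IndefiniteDescription.
Import GRing.Theory.
Local Open Scope ring_scope.
Set Implicit Arguments. Unset Strict Implicit.

Lemma lin0 (k : fieldType) (U V : lmodType k) (f : U -> V) : lin f -> f 0 = 0.
Proof.
move=> h; have := h 1 0 0; rewrite !scale1r addr0 => E.
by apply/(addrI (f 0)); rewrite addr0 -E.
Qed.

Lemma linD (k : fieldType) (U V : lmodType k) (f : U -> V) : lin f ->
  forall x y, f (x + y) = f x + f y.
Proof. by move=> h x y; have := h 1 x y; rewrite !scale1r. Qed.

Lemma linZ (k : fieldType) (U V : lmodType k) (f : U -> V) : lin f ->
  forall a x, f (a *: x) = a *: f x.
Proof. by move=> h a x; have := h a x 0; rewrite !addr0 (lin0 h) addr0. Qed.

Lemma linB (k : fieldType) (U V : lmodType k) (f : U -> V) : lin f ->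
  forall x y, f (x - y) = f x - f y.
Proof.
move=> h x y; rewrite (linD h) -scaleN1r (linZ h) scaleN1r //.
Qed.

Lemma lin_sum (k : fieldType) (U V : lmodType k) (f : U -> V) : lin f ->
  forall (I : Type) (r : seq I) (P : pred I) (F : I -> U),
  f (\sum_(i <- r | P i) F i) = \sum_(i <- r | P i) f (F i).
Proof. move=> h; exact: (big_morph f (linD h) (lin0 h)). Qed.

Lemma bilin_mulS (k : fieldType) (H : comAlgType k) (S : H -> H) :
  lin S -> bilin (fun a b : H => a * S b).
Proof.
move=> hS; split.
- by move=> y a x z; rewrite mulrDl scalerAl.
- by move=> x a y z; rewrite hS mulrDr scalerAr.
Qed.

Lemma lift_sum (k : fieldType) (H : comAlgType k) (T : tensor2 H) (W : lmodType k)
  (f : H -> H -> W) (s : seq (H * H)) (P : pred (H * H)) : bilin f ->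
  t2_lift f (\sum_(ab <- s | P ab) t2_tens T ab.1 ab.2) = \sum_(ab <- s | P ab) f ab.1 ab.2.
Proof.
move=> hf; rewrite (lin_sum (t2_lift_lin hf)); apply: eq_bigr => ab _.
by rewrite t2_lift_tens.
Qed.

Lemma sum_widen (V : zmodType) (f : nat -> V) N K : (N <= K)%N ->
  (forall i, (N <= i)%N -> f i = 0) -> \sum_(i < K) f i = \sum_(i < N) f i.
Proof.
move=> NK fN; rewrite -!(big_mkord xpredT) (big_cat_nat (leq0n N) NK) /=.
rewrite [X in _ + X]big1_seq ?addr0 // => i /andP[_]; rewrite mem_index_iota => /andP[Hi _].
exact: fN.
Qed.

Lemma sum_single (V : zmodType) (x : V) n :
  \sum_(i < n.+1) (if (i : nat) == n then x else 0) = x.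
Proof.
rewrite big_ord_recr /= eqxx big1 ?add0r // => i _.
by rewrite (ltn_eqF (ltn_ord i)).
Qed.

Lemma dec_uniq (k : fieldType) (H : lmodType k) (Hn : nat -> {pred H}) :
  (forall n, 0 \in Hn n /\
     forall (a : k) x y, x \in Hn n -> y \in Hn n -> a *: x + y \in Hn n) ->
  (forall N (xs : nat -> H), (forall i, xs i \in Hn i) ->
          \sum_(i < N) xs i = 0 -> forall i, (i < N)%N -> xs i = 0) ->
  forall (f g : nat -> H) N M, (forall i, f i \in Hn i) -> (forall i, g i \in Hn i) ->
  (forall i, (N <= i)%N -> f i = 0) -> (forall i, (M <= i)%N -> g i = 0) ->
  \sum_(i < N) f i = \sum_(i < M) g i -> forall i, f i = g i.
Proof.
move=> Hcl Hu f g N M fH gH fN gM E i.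
have hH j : f j - g j \in Hn j.
  by rewrite -scaleN1r addrC; apply: (Hcl j).2.
have S0 : \sum_(j < maxn N M) (f j - g j) = 0.
  rewrite sumrB (sum_widen (leq_maxl N M) fN) (sum_widen (leq_maxr N M) gM).
  by rewrite E subrr.
case: (ltnP i (maxn N M)) => hi.
  by apply/eqP; rewrite -subr_eq0; apply/eqP; exact: (Hu _ _ hH S0).
rewrite fN ?gM //; [exact: leq_trans (leq_maxr N M) hi | exact: leq_trans (leq_maxl N M) hi].
Qed.

Lemma proj_ex (k : fieldType) (H : lmodType k) (Hn : nat -> {pred H}) :
  (forall n, 0 \in Hn n /\
     forall (a : k) x y, x \in Hn n -> y \in Hn n -> a *: x + y \in Hn n) ->
  (forall x, exists N (xs : nat -> H),
          (forall i, xs i \in Hn i) /\ x = \sum_(i < N) xs i) ->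
  (forall N (xs : nat -> H), (forall i, xs i \in Hn i) ->
          \sum_(i < N) xs i = 0 -> forall i, (i < N)%N -> xs i = 0) ->
  exists (pi : nat -> H -> H) (bnd : H -> nat),
    [/\ forall i x, pi i x \in Hn i,
        forall x i, (bnd x <= i)%N -> pi i x = 0,
        forall x, x = \sum_(i < bnd x) pi i x,
        forall i, lin (pi i) &
        forall n x, x \in Hn n -> forall i, pi i x = if i == n then x else 0].
Proof.
move=> Hcl Hdec Hu.
have ex : forall x, exists fN : (nat -> H) * nat,
    [/\ forall i, fN.1 i \in Hn i, forall i, (fN.2 <= i)%N -> fN.1 i = 0
      & x = \sum_(i < fN.2) fN.1 i].
  move=> x; have [N [xs [hxs ->]]] := Hdec x.
  exists ((fun i => if (i < N)%N then xs i else 0), N); split => /=.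
  - by move=> i; case: ifP => _ //; exact: (Hcl i).1.
  - by move=> i hi; rewrite ltnNge hi.
  - by apply: eq_bigr => i _; rewrite ltn_ord.
pose dec x := proj1_sig (constructive_indefinite_description _ (ex x)).
have decP x : [/\ forall i, (dec x).1 i \in Hn i,
    forall i, ((dec x).2 <= i)%N -> (dec x).1 i = 0
      & x = \sum_(i < (dec x).2) (dec x).1 i].
  exact: (proj2_sig (constructive_indefinite_description _ (ex x))).
exists (fun i x => (dec x).1 i), (fun x => (dec x).2); split.
- by move=> i x; case: (decP x).
- by move=> x i; case: (decP x) => _ h _; exact: h.
- by move=> x; case: (decP x).
- move=> i a x y.
  have [hx bx sx] := decP x; have [hy byy sy] := decP y.
  have [hz bz sz] := decP (a *: x + y).
  pose g j := a *: (dec x).1 j + (dec y).1 j.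
  have := @dec_uniq k H Hn Hcl Hu _ g _ (maxn (dec x).2 (dec y).2) hz _ bz _ _ i.
  apply.
  + by move=> j; apply: (Hcl j).2.
  + move=> j hj; rewrite /g bx ?byy ?scaler0 ?addr0 //.
    * exact: leq_trans (leq_maxr _ _) hj.
    * exact: leq_trans (leq_maxl _ _) hj.
  + rewrite -sz /g big_split /= -scaler_sumr.
    rewrite (sum_widen (leq_maxl _ _) bx) (sum_widen (leq_maxr _ _) byy).
    by rewrite -sx -sy.
- move=> n x hx i.
  have [hz bz sz] := decP x.
  pose g j := if j == n then x else 0.
  have := @dec_uniq k H Hn Hcl Hu _ g _ n.+1 hz _ bz _ _ i.
  apply.
  + by move=> j; rewrite /g; case: eqP => [->|_] //; exact: (Hcl j).1.
  + by move=> j hj; rewrite /g (gtn_eqF hj).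
  + by rewrite -sz /g sum_single.
Qed.

Fixpoint Sle (k : fieldType) (H : comAlgType k) (T : tensor2 H)
  (pi : nat -> H -> H) (L : H -> T) (n : nat) : H -> H :=
  match n with
  | 0 => pi 0%N
  | n'.+1 => fun b => Sle pi L n' b - t2_lift (fun a c => a * Sle pi L n' c) (L (pi n b))
  end.

Unset Implicit Arguments.

Theorem theorem4p6 (k : fieldType) (H : comAlgType k)
  (T : tensor2 H) (T3 : tensor3 H) (Delta : H -> T) (eps : H -> k)
  (Hn : nat -> {pred H}) :
  left_counital_bialgebra T3 Delta eps ->
  connected_graded Delta eps Hn ->
  exists S : H -> H,
    [/\ lin S,
        (forall x, conv Delta id S x = (eps x)%:A),
        S 1 = 1 &
        (forall n x, (0 < n)%N -> x \in Hn n ->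
           S x = - t2_lift (fun a b => a * S b) (Delta x - t2_tens T 1 x))].
Proof.
move=> [DL DM D1 _ [eL eM e1 eC]] [[Hcl Hdec Huniq Hmul Hdel] H0 Heps].
have [pi [bnd [piH pib pisum pilin pihom]]] := proj_ex Hcl Hdec Huniq.
pose L x := Delta x - t2_tens T 1 x.
have tL b : lin (fun a => t2_tens T a b) by case: (t2_tens_bilin T) => h _; exact: h.
have tR a : lin (t2_tens T a) by case: (t2_tens_bilin T) => _ h; exact: h.
have LL : lin L.
  move=> a x y; rewrite /L DL (tR 1) scalerBr opprD addrACA //.
have SleS n b : Sle pi L n.+1 b =
    Sle pi L n b - t2_lift (fun a c => a * Sle pi L n c) (L (pi n.+1 b)) by [].
have SleL n : lin (Sle pi L n).
  elim: n => [|n IH] /=; first exact: pilin.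
  move=> a x y; rewrite (pilin n.+1) LL (t2_lift_lin (bilin_mulS IH)) IH.
  by rewrite scalerBr opprD addrACA.
have liftF0 n : t2_lift (fun a c => a * Sle pi L n c) (L 0) = 0.
  by rewrite (lin0 LL) (lin0 (t2_lift_lin (bilin_mulS (SleL n)))).
have stab x m : (forall i, (m < i)%N -> pi i x = 0) ->
    forall n, (m <= n)%N -> Sle pi L n x = Sle pi L m x.
  move=> hx; elim => [|n IH] hn.
    by move: hn; rewrite leqn0 => /eqP->.
  move: hn; rewrite leq_eqVlt => /orP[/eqP->//|hn].
  by rewrite SleS hx // liftF0 subr0 IH.
have low q x : x \in Hn q -> forall n, (n < q)%N -> Sle pi L n x = 0.
  move=> hx; elim => [|n IH] hn /=.
    by rewrite (pihom _ _ hx) (ltn_eqF hn).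
  by rewrite (pihom _ _ hx) (ltn_eqF hn) liftF0 subr0 IH // ltnW.
pose S x := Sle pi L (bnd x) x.
have SE x m : (forall i, (m < i)%N -> pi i x = 0) -> S x = Sle pi L m x.
  move=> hx; rewrite /S -(stab x m hx (maxn m (bnd x))) ?leq_maxl //.
  rewrite (stab x (bnd x)) ?leq_maxr // => i hi; apply: pib; exact: ltnW.
have Shom q x : x \in Hn q -> S x = Sle pi L q x.
  by move=> hx; apply: SE => i hi; rewrite (pihom _ _ hx) (gtn_eqF hi).
have Slin : lin S.
  move=> a x y; set M := maxn (bnd x) (bnd y).
  rewrite (SE _ M) ?(SE x M) ?(SE y M) ?SleL //.
  - by move=> i hi; apply: pib; apply: ltnW; exact: leq_ltn_trans (leq_maxr _ _) hi.
  - by move=> i hi; apply: pib; apply: ltnW; exact: leq_ltn_trans (leq_maxl _ _) hi.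
  - move=> i hi; rewrite pilin !pib ?scaler0 ?addr0 //; apply: ltnW.
    + exact: leq_ltn_trans (leq_maxr _ _) hi.
    + exact: leq_ltn_trans (leq_maxl _ _) hi.
have S1 : S 1 = 1.
  have h1 : (1 : H) \in Hn 0%N by apply/H0; exists 1; rewrite scale1r.
  by rewrite (Shom _ _ h1) /= (pihom _ _ h1).
have eps0 : eps 0 = 0.
  have := eL 1 0 0; rewrite scale1r addr0 mul1r => E.
  by apply/(addrI (eps 0)); rewrite addr0 -E.
have epsA c : eps (c%:A) = c.
  by have := eL c 1 0; rewrite addr0 e1 eps0 mulr1 addr0.
have epsp p a : (0 < p)%N -> a \in Hn p -> eps a = 0.
  case: p => [//|p] _ ha; apply/Heps; exists p.+1, (fun i => if i == p then a else 0).
  split; last by rewrite sum_single.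
  by move=> i; case: eqP => [->//|_]; exact: (Hcl _).1.
have tensZl a x b : t2_tens T (a *: x) b = a *: t2_tens T x b by exact: (linZ (tL b)).
have tensZr a x b : t2_tens T b (a *: x) = a *: t2_tens T b x by exact: (linZ (tR b)).
have keyA n x : (0 < n)%N -> x \in Hn n -> exists s : seq (H * H),
    L x = \sum_(ab <- s) t2_tens T ab.1 ab.2 /\
    forall ab, ab \in s -> exists q, (q < n)%N /\ ab.2 \in Hn q.
  move=> n0 hx; have [s [Ds hs]] := Hdel n x hx.
  pose P (ab : H * H) := (ab.1 \in Hn 0%N) && (ab.2 \in Hn n).
  have mixed ab : ab \in s -> ~~ P ab -> exists p q, [/\ (0 < p)%N, (0 < q)%N,
      (p + q)%N = n, ab.1 \in Hn p & ab.2 \in Hn q].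
    by move=> /hs [[h1 h2]|//]; rewrite /P h1 h2.
  exists [seq ab <- s | ~~ P ab]; split.
  - have eT : bilin (fun a b : H => eps a *: b).
      split; first by move=> y a x' z /=; rewrite /lin /=; idtac; rewrite eL scalerDl scalerA.
      by move=> x' a y z /=; rewrite scalerDr !scalerA mulrC.
    have ex : x = \sum_(ab <- s | P ab) eps ab.1 *: ab.2.
      rewrite -{1}(eC x) Ds lift_sum // (bigID P) /= [X in _ + X]big1_seq ?addr0 //.
      move=> ab /andP[nP abs]; have [p [q [p0 _ _ h1 _]]] := mixed ab abs nP.
      by rewrite (epsp p) // scale0r.
    have ET : \sum_(ab <- s | P ab) t2_tens T ab.1 ab.2 = t2_tens T 1 x.
      rewrite ex (lin_sum (tR 1)); apply: eq_bigr => ab /andP[h1 _].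
      have [c ->] := (H0 _).1 h1.
      by rewrite epsA tensZl tensZr.
    rewrite big_filter /L Ds (bigID P) /= ET; apply/eqP.
    by rewrite subr_eq addrC.
  - move=> ab; rewrite mem_filter => /andP[nP abs].
    have [p [q [p0 q0 pq _ h2]]] := mixed ab abs nP.
    by exists q; split => //; rewrite -pq -{1}(add0n q) ltn_add2r.
have rec n x : (0 < n)%N -> x \in Hn n ->
    S x = - t2_lift (fun a b => a * S b) (Delta x - t2_tens T 1 x).
  case: n => [//|n] _ hx.
  rewrite (Shom _ _ hx) SleS (low _ _ hx n) // (pihom _ _ hx) eqxx sub0r.
  congr (- _).
  have [s [Ls hs]] := keyA n.+1 x isT hx.
  rewrite -/(L x) Ls !lift_sum; try exact: bilin_mulS.
  apply: eq_big_seq => ab abs; have [q [qn hq]] := hs ab abs.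
  rewrite (Shom _ _ hq) (stab _ q) // => i hi.
  by rewrite (pihom _ _ hq) (gtn_eqF hi).
have hom_conv n y : y \in Hn n -> conv Delta id S y = (eps y)%:A.
  case: n => [|n] hy.
    have [c ->] := (H0 y).1 hy.
    rewrite /conv (linZ DL) D1 (linZ (t2_lift_lin (bilin_mulS Slin))).
    by rewrite t2_lift_tens ?S1 ?mulr1 ?epsA //; exact: bilin_mulS.
  rewrite /conv -(subrK (t2_tens T 1 y) (Delta y)).
  rewrite (linD (t2_lift_lin (bilin_mulS Slin))) t2_lift_tens; last exact: bilin_mulS.
  rewrite [S y](rec n.+1) // (epsp n.+1) // scale0r /= mul1r addrN //.
have convL : lin (conv Delta id S).
  move=> a x y; rewrite /conv DL.
  exact: (t2_lift_lin (bilin_mulS Slin)).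
have epsAL : lin (fun x : H => (eps x)%:A : H).
  by move=> a x y /=; rewrite eL scalerDl scalerA.
exists S; split => //.
move=> x; rewrite (pisum x) (lin_sum convL) (lin_sum epsAL).
apply: eq_bigr => i _; exact: (hom_conv i).
Qed.
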